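(* Let $X_{0-}$ be a real-valued random variable with a bounded density $V_{0-}$, and let $Y^1,Y^2$ be càdlàg stochastic processes on $[0,\infty)$ such that $X_{0-}$ is independent of $(Y^1,Y^2)$. Then for every $t\ge0$, $\left|\mathbb{P}\left(\inf_{0\le s\le t}(X_{0-}+Y^1_s)\le0\right)-\mathbb{P}\left(\inf_{0\le s\le t}(X_{0-}+Y^2_s)\le0\right)\right|\le\|V_{0-}\|_\infty\,\mathbb{E}\left[\sup_{0\le s\le t}|Y^1_s-Y^2_s|\right]$. *)

(* Defs.v *)
From HB Require Import structures.
From mathcomp Require Import all_boot all_order all_algebra.
From mathcomp Require Import all_classical all_reals all_analysis.
Set Implicit Arguments. Unset Strict Implicit. Unset Printing Implicit Defensive.
Import Order.TTheory GRing.Theory Num.Theory.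
Import numFieldNormedType.Exports.
Local Open Scope classical_set_scope.
Local Open Scope ring_scope.

Definition cadlag {R : realType} (f : R -> R) : Prop :=
  (forall s : R, 0 <= s -> f x @[x --> at_right s] --> f s) /\
  (forall s : R, 0 < s -> cvg (f x @[x --> at_left s])).

Definition gen_sigma_pair {d} {T : measurableType d} {R : realType}
  (Y1 Y2 : R -> T -> R) : set (set T) :=
  <<s [set E | exists s : R, exists B : set R,
        [/\ 0 <= s, measurable B & (E = Y1 s @^-1` B \/ E = Y2 s @^-1` B)]] >>.

Definition indep_rv_sigma {d} {T : measurableType d} {R : realType}
  (P : probability T R) (X : T -> R) (G : set (set T)) : Prop :=
  forall A B, measurable A -> G B ->
    P (X @^-1` A `&` B) = (P (X @^-1` A) * P B)%E.

(* Main.v *)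
Require Import Defs.
From HB Require Import structures.
From mathcomp Require Import all_boot all_order all_algebra.
From mathcomp Require Import all_classical all_reals all_analysis.
From mathcomp Require Import measurable_realfun zify ring lra.
Set Implicit Arguments. Unset Strict Implicit. Unset Printing Implicit Defensive.
Import Order.TTheory GRing.Theory Num.Theory.
Import numFieldNormedType.Exports.
Local Open Scope classical_set_scope.
Local Open Scope ring_scope.
Section S.
Context (R : realType).
Lemma rc_red (f : R -> R) (t c : R) :
  (forall s, 0 <= s -> f x @[x --> at_right s] --> f s) ->
  (exists2 s, `[0, t]%classic s & f s < c) ->
  f t < c \/ exists q : rat, (0 <= (ratr q : R) <= t) && (f (ratr q) < c).
Proof.
move=> rc [s]; rewrite /= in_itv /= => /andP[s0 st] fsc.
have [est|neq] := eqVneq s t; first by left; rewrite -est.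
have lt : s < t by rewrite lt_neqAle neq st.
right.
have H : \forall x \near at_right s, f x < c := cvgr_lt (f s) (rc s s0) c fsc.
have : nbhs_ball s (fun u => s < u -> f u < c) by rewrite -nbhs_ballP; exact: H.
move=> [e /= e0 He].
have sy : s < Num.min (s + e) t by rewrite lt_min lt ltrDl e0.
have [q] := rat_in_itvoo sy; rewrite in_itv /= lt_min => /andP[sq /andP[qse qt]].
exists q; apply/andP; split; first by rewrite (ltW qt) andbT (le_trans s0 (ltW sq)).
apply: He => //=; rewrite -ball_normE /= ltr0_norm ?subr_lt0 //.
by rewrite opprB ltrBlDl.
Qed.


Definition Ex (U : Type) (Y : R -> U -> R) (t c : R) : set U :=
  [set w | exists2 s, `[0, t]%classic s & Y s w < c].

Lemma Ex_meas d' (U : measurableType d') (Y : R -> U -> R) t c :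
  (forall s c, 0 <= s -> measurable [set w | Y s w < c]) ->
  (forall w s, 0 <= s -> Y x w @[x --> at_right s] --> Y s w) ->
  0 <= t -> measurable (Ex Y t c).
Proof.
move=> hY rc t0.
have -> : Ex Y t c = [set w | Y t w < c] `|` \bigcup_(q : rat)
    (if (0 <= (ratr q : R) <= t) then [set w | Y (ratr q) w < c] else set0).
  apply/seteqP; split => w.
    move=> /(rc_red (rc w)) [h|[q /andP[qi h]]]; [by left|right; exists q => //].
    by rewrite qi.
  case=> [h|[q _]]; first by exists t => //=; rewrite in_itv /= t0 lexx.
  case: ifP => // /andP[q0 qt] h; exists (ratr q) => //=.
  by rewrite in_itv /= q0 qt.
apply: measurableU; first exact: hY.
apply: bigcupT_measurable_rat => q; case: ifP => [/andP[q0 _]|_] //.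
exact: hY.
Qed.

Definition Ev (U : Type) (X : U -> R) (Y : R -> U -> R) (t : R) : set U :=
  [set w | (ereal_inf [set (X w + Y s w)%:E | s in `[0%R, t]%classic] <= 0)%E].

Lemma Ev_eq (U : Type) (X : U -> R) (Y : R -> U -> R) (t : R) :
  Ev X Y t = \bigcap_(q : rat)
    (if 0 < (ratr q : R) then Ex (fun s w => X w + Y s w) t (ratr q) else setT).
Proof.
apply/seteqP; split => w.
  move=> hw q _; case: ifP => // q0.
  have : (ereal_inf [set (X w + Y s w)%:E | s in `[0%R, t]%classic] < (ratr q)%:E)%E.
    by apply: (le_lt_trans hw); rewrite lte_fin.
  by move=> /ereal_inf_lt [y [s st <-]]; rewrite lte_fin => h; exists s.
move=> hw; rewrite /Ev /=; apply/lee_addgt0Pr => e e0; rewrite add0e.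
have [q] := rat_in_itvoo e0; rewrite in_itv /= => /andP[q0 qe].
have := hw q I; rewrite q0 => -[s st h].
apply: (@le_trans _ _ (X w + Y s w)%:E).
  by apply: ereal_inf_lbound; exists s.
by rewrite lee_fin; apply: ltW; apply: lt_trans qe.
Qed.

Lemma lt_meas d' (U : measurableType d') (f : U -> R) c :
  measurable_fun setT f -> measurable [set w | f w < c].
Proof.
move=> mf; have := mf measurableT _ (measurable_itv `]-oo, c[).
rewrite setTI; congr measurable; apply/seteqP; split => w /=; rewrite in_itv //.
Qed.

Lemma Ev_meas d' (U : measurableType d') (X : U -> R) (Y : R -> U -> R) t :
  measurable_fun setT X -> (forall s, 0 <= s -> measurable_fun setT (Y s)) ->
  (forall w s, 0 <= s -> Y x w @[x --> at_right s] --> Y s w) ->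
  0 <= t -> measurable (Ev X Y t).
Proof.
move=> mX mY rc t0; rewrite Ev_eq.
rewrite -[X in measurable X]setCK setC_bigcap; apply: measurableC.
apply: bigcupT_measurable_rat => q; apply: measurableC.
case: ifP => _ //; apply: Ex_meas => //.
  by move=> s c s0; apply: lt_meas; exact: measurable_funD (mY s s0).
by move=> w s s0; apply: cvgD; [exact: cvg_cst|exact: rc].
Qed.
End S.

Section S.
Context (R : realType).

Lemma sum_itv_nat n a b :
  (\sum_(i < n) ((a <= i <= b)%N : nat) <= minn n b.+1 - a)%N.
Proof.
elim: n => [|n IH]; first by rewrite big_ord0.
rewrite big_ord_recr /=; move: IH; set S := bigop _ _ _ => IH.
case: (leqP a n) => an; case: (leqP n b) => nb /=; lia.
Qed.

Lemma count_bound (n : nat) (Pb : nat -> bool) (h z : R) :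
  0 < h -> 0 <= z ->
  (forall i j, Pb i -> Pb j -> (i < j)%N -> (j - i - 1)%:R * h < z) ->
  h * (\sum_(i < n) (Pb i)%:R) <= z + 2 * h.
Proof.
move=> h0 z0 H.
have [ex|nex] := pselect (exists i, (i < n)%N && Pb i); last first.
  rewrite big1 ?mulr0; last first.
    move=> i _; case: (boolP (Pb i)) => // Pi; exfalso; apply: nex; exists i.
    by rewrite ltn_ord Pi.
  by rewrite addr_ge0 // mulr_ge0 // ltW.
have bnd : forall i, (i < n)%N && Pb i -> (i <= n)%N by move=> i /andP[/ltnW].
set i0 := ex_minn ex.
set i1 := ex_maxn ex bnd.
have [Pi0 mi0] : ((i0 < n)%N && Pb i0) /\ (forall i, (i < n)%N && Pb i -> (i0 <= i)%N).
  by rewrite /i0; case: ex_minnP.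
have [Pi1 mi1] : ((i1 < n)%N && Pb i1) /\ (forall i, (i < n)%N && Pb i -> (i <= i1)%N).
  by rewrite /i1; case: ex_maxnP.
have le1 : (\sum_(i < n) (Pb i : nat) <= i1.+1 - i0)%N.
  apply: (leq_trans _ (leq_trans (sum_itv_nat n i0 i1) _)); last lia.
  apply: leq_sum => i _; case: (boolP (Pb i)) => // Pi.
  by rewrite (mi0 i) ?(mi1 i) // ltn_ord Pi.
have -> : \sum_(i < n) ((Pb i)%:R : R) = (\sum_(i < n) (Pb i : nat))%:R.
  by rewrite natr_sum.
apply: (@le_trans _ _ (h * (i1.+1 - i0)%:R)).
  by rewrite ler_pM2l // ler_nat.
have i01 : (i0 <= i1)%N by apply: mi0.
move: Pi0 Pi1 => /andP[_ P0] /andP[_ P1].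
case: (ltngtP i0 i1) i01 => // [lt01|eq01] _.
  have := H _ _ P0 P1 lt01.
  have -> : (i1.+1 - i0 = (i1 - i0 - 1) + 2)%N by lia.
  rewrite natrD; set k := ((i1 - i0 - 1)%:R : R) => hk.
  lra.
rewrite eq01 subSnn mulr1; lra.
Qed.
End S.

Section ge0_le_integral_nm.
Local Open Scope ereal_scope.
Context d (T : measurableType d) (R : realType).
Variable mu : {measure set T -> \bar R}.
Variables (D : set T) (mD : measurable D) (f1 f2 : T -> \bar R).
Hypothesis f10 : forall x, D x -> 0 <= f1 x.
Hypothesis mf1 : measurable_fun D f1.

Import HBNNSimple.

Lemma ge0_le_integral_nm : (forall x, D x -> f1 x <= f2 x) ->
  \int[mu]_(x in D) f1 x <= \int[mu]_(x in D) f2 x.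
Proof.
move=> f12; rewrite !(integral_mkcond D).
set h1 := f1 \_ D; set h2 := f2 \_ D.
have h10 x : 0 <= h1 x by apply: erestrict_ge0.
have h20 x : 0 <= h2 x.
  by apply: erestrict_ge0 => // t /[dup] Dt /f12; apply: le_trans; exact: f10.
have mh1 : measurable_fun setT h1 by exact/(measurable_restrictT _ _).1.
have h12 x : h1 x <= h2 x by apply: lee_restrict.
pose g1 := nnsfun_approx measurableT mh1.
rewrite (@nd_ge0_integral_lim _ _ _ _ _ g1)//; last 2 first.
  by move=> x m n mn; exact/lefP/nd_nnsfun_approx.
  by move=> x; exact: cvg_nnsfun_approx.
apply: lime_le.
  by apply: is_cvg_sintegral => // t m n mn; exact/lefP/nd_nnsfun_approx.
near=> n; rewrite ge0_integralTE//; apply: ereal_sup_ubound => /=.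
exists (g1 n) => // t; rewrite (le_trans _ (h12 _))//.
have := leey (h1 t); rewrite le_eqVlt => /predU1P[->|ftoo].
  by rewrite leey.
have h1tfin : h1 t \is a fin_num.
  by rewrite fin_numE gt_eqF/= ?lt_eqF// (lt_le_trans _ (h10 t)).
have /= := @cvg_nnsfun_approx _ _ _ _ measurableT _ mh1 (fun x _ => h10 x) t Logic.I.
rewrite -(fineK h1tfin) => /fine_cvgP[ft_near].
set u_ := (X in X --> _) => u_h1.
have <- : lim u_ = fine (h1 t) by exact/cvg_lim.
rewrite lee_fin; apply: nondecreasing_cvgn_le.
  by move=> // a b ab; rewrite /u_ /=; exact/lefP/nd_nnsfun_approx.
by apply/cvg_ex; eexists; exact: u_h1.
Unshelve. all: by end_near. Qed.

End ge0_le_integral_nm.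

Section S.
Context (d : measure_display) (T : measurableType d) (R : realType)
  (P : probability T R) (X : T -> R) (V : R -> R) (M : R).
Hypothesis mV : measurable_fun setT V.
Hypothesis HV : forall A, measurable A ->
     P (X @^-1` A) = (\int[lebesgue_measure]_(x in A) (V x)%:E)%E.
Hypothesis HM : {ae lebesgue_measure, forall x, V x <= M}.

Lemma dens_bound A : measurable A ->
  (P (X @^-1` A) <= (Num.max M 0)%:E * lebesgue_measure A)%E.
Proof.
move=> mA; rewrite HV // integralE.
have mVe : measurable_fun A (EFin \o V).
  by apply/measurable_EFinP; exact: measurable_funS mV.
apply: (@le_trans _ _ (\int[lebesgue_measure]_(x in A) ((EFin \o V)^\+ x))%E).
  rewrite -[leRHS]sube0; apply: leeB => //; exact: integral_ge0.
rewrite -integral_cst //.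
apply: ae_ge0_le_integral => //.
- exact: measurable_funepos.
- by move=> x _; rewrite /= lee_fin le_max lexx orbT.
- apply: negligibleS HM => x /= nP VM; apply: nP => Ax; rewrite funeposE /=.
  by rewrite /maxe /=; case: ifP => _; rewrite lee_fin le_max ?lexx ?orbT ?VM.
Qed.

End S.

Lemma find_cell (R : realType) (b h x : R) (n : nat) : 0 < h ->
  b < x <= b + n%:R * h -> exists2 i, (i < n)%N & b + i%:R * h < x <= b + i%:R * h + h.
Proof.
move=> h0; elim: n => [|n IH] /andP[bx xn].
  by move: (lt_le_trans bx xn); rewrite mul0r addr0 ltxx.
have [xle|xgt] := leP x (b + n%:R * h).
  by have [i ilt hi] := IH ltac:(by rewrite bx xle); exists i => //; rewrite ltnS ltnW.
exists n => //; rewrite xgt /=; move: xn; rewrite -natr1 mulrDl mul1r addrA //.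
Qed.

Definition Zs (U : Type) (R : realType) (Y1 Y2 : R -> U -> R) (t : R) (w : U) : \bar R :=
  ereal_sup [set `|Y1 s w - Y2 s w|%:E | s in `[0%R, t]%classic].

Section Core.
Context (d : measure_display) (T : measurableType d) (R : realType)
  (P : probability T R) (X : T -> R) (M : R) (Y1 Y2 : R -> T -> R) (t : R)
  (G : set (set T)).
Hypothesis hM0 : 0 <= M.
Hypothesis hJ : forall a h : R, 0 < h ->
  (P (X @^-1` `]a, (a + h)%R]%classic) <= (M * h)%:E)%E.
Hypothesis mX : measurable_fun setT X.
Hypothesis hGm : forall B, G B -> measurable B.
Hypothesis hGI : forall A B, G A -> G B -> G (A `&` B).
Hypothesis hGC : forall A, G A -> G (~` A).
Hypothesis hG1 : forall c, G (Ex Y1 t c).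
Hypothesis hG2 : forall c, G (Ex Y2 t c).
Hypothesis hind : indep_rv_sigma P X G.
Hypothesis mE1 : measurable (Ev X Y1 t).
Hypothesis mE2 : measurable (Ev X Y2 t).
Hypothesis t0 : 0 <= t.

Lemma Zs_ge0 w : (0 <= Zs Y1 Y2 t w)%E.
Proof.
apply: (@le_trans _ _ (`|Y1 0 w - Y2 0 w|%:E)); first by rewrite lee_fin.
by apply: ereal_sup_ubound; exists 0 => //=; rewrite in_itv /= lexx t0.
Qed.

Lemma core (b : R) (n : nat) (h : R) : 0 < h ->
  (P (Ev X Y1 t `&` ~` Ev X Y2 t `&` X @^-1` `]b, (b + n%:R * h)%R]%classic)
     <= M%:E * (\int[P]_w Zs Y1 Y2 t w + (2 * h)%:E))%E.
Proof.
move=> h0.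
pose a (i : nat) := b + i%:R * h.
pose Gs (i : nat) := Ex Y1 t (- a i) `&` ~` Ex Y2 t (- (a i + h)).
pose F (i : nat) := X @^-1` `]a i, (a i + h)%R]%classic `&` Gs i.
have GGs i : G (Gs i) by apply: hGI; [exact: hG1|apply: hGC; exact: hG2].
have mGs i : measurable (Gs i) by apply: hGm.
have mXJ (c e : R) : measurable (X @^-1` `]c, e]%classic).
  by have := mX measurableT (measurable_itv `]c, e]); rewrite setTI.
have mF i : measurable (F i) by apply: measurableI.
have step1 : (P (Ev X Y1 t `&` ~` Ev X Y2 t `&` X @^-1` `]b, (b + n%:R * h)%R]%classic)
    <= \sum_(i < n) P (F i))%E.
  apply: content_subadditive => //.
  - by apply: measurableI; [apply: measurableI => //; exact: measurableC|].
  - move=> w [[E1w nE2w] /=]; rewrite in_itv /= => Xw.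
    have [i ilt /andP[lo hi]] := find_cell h0 Xw.
    rewrite -bigcup_mkord; exists i => //.
    split; first by rewrite /= in_itv /= lo hi.
    split.
    + have : (ereal_inf [set (X w + Y1 s w)%:E | s in `[0%R, t]%classic] < (X w - a i)%:E)%E.
        by apply: (le_lt_trans E1w); rewrite lte_fin subr_gt0.
      move=> /ereal_inf_lt [y [s st <-]]; rewrite lte_fin => hs; exists s => //.
      rewrite /a in hs *; lra.
    + move=> [s st hs]; apply: nE2w; rewrite /Ev /=.
      apply: (@le_trans _ _ (X w + Y2 s w)%:E).
        by apply: ereal_inf_lbound; exists s.
      rewrite lee_fin; rewrite /a in hs; lra.
have step2 i : (P (F i) <= (M * h)%:E * P (Gs i))%E.
  rewrite /F (hind (measurable_itv `]a i, (a i + h)%R]) (GGs i)).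
  by apply: lee_wpmul2r => //; exact: hJ.
have step3 : (h%:E * \sum_(i < n) P (Gs i)
    <= \int[P]_w Zs Y1 Y2 t w + (2 * h)%:E)%E.
  pose fe (i : nat) (w : T) := (h * \1_(Gs i) w)%:E.
  pose f w := \sum_(i < n) fe i w.
  have mfe i : measurable_fun setT (fe i).
    apply/measurable_EFinP; apply: measurable_funM; first exact: measurable_cst.
    exact: measurable_indic.
  have mf : measurable_fun setT f by apply: emeasurable_sum.
  have fe0 i w : (0 <= fe i w)%E.
    by rewrite lee_fin indicE mulr_ge0 // ltW.
  have f0 w : (0 <= f w)%E by apply: sume_ge0 => i _; exact: fe0.
  have intf : (\int[P]_w f w = h%:E * \sum_(i < n) P (Gs i))%E.
    rewrite ge0_integral_sum //.
    rewrite ge0_sume_distrr //.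
    apply: eq_bigr => i _; rewrite /fe.
    under eq_integral do rewrite EFinM.
    rewrite ge0_integralZl ?integral_indic ?setIT //;
      try by [apply/measurable_EFinP; exact: measurable_indic |
              move=> w _; rewrite lee_fin indicE | rewrite lee_fin ltW].
  pose g w := maxe (f w - (2 * h)%:E)%E 0%E.
  have fE w : f w = (h * \sum_(i < n) \1_(Gs i) w)%:E.
    by rewrite /f /fe sumEFin mulr_sumr.
  have gZ w : (g w <= Zs Y1 Y2 t w)%E.
    rewrite /g fE -EFinB -EFin_max.
    case E: (Zs Y1 Y2 t w) => [z| |]; [|by rewrite leey|by have := Zs_ge0 w; rewrite E].
    have z0 : 0 <= z by have := Zs_ge0 w; rewrite E lee_fin.
    rewrite lee_fin ge_max z0 andbT lerBlDr.
    under eq_bigr do rewrite indicE.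
    apply: (@count_bound R n (fun i => w \in Gs i)) => // i j.
    rewrite !inE => -[_ nE2] -[[s st hs] _] lt.
    have hs2 : - (a i + h) <= Y2 s w.
      by rewrite leNgt; apply/negP => hh; apply: nE2; exists s.
    have hz : `|Y1 s w - Y2 s w| <= z.
      by rewrite -lee_fin -E; apply: ereal_sup_ubound; exists s.
    have hn : Y2 s w - Y1 s w <= `|Y1 s w - Y2 s w| by rewrite distrC ler_norm.
    have -> : ((j - i - 1)%:R : R) = j%:R - i%:R - 1.
      by rewrite natrB ?subn_gt0 // natrB // ltnW.
    rewrite /a in hs hs2; rewrite !mulrBl mul1r; lra.
  have fg w : (f w <= g w + cst (2 * h)%:E w)%E.
    rewrite /g fE -EFinB -EFin_max /= -EFinD lee_fin -lerBlDr.
    by rewrite le_max lexx.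
  have mg : measurable_fun setT g.
    by apply: measurable_maxe => //; apply: emeasurable_funB.
  have g0 w : (0 <= g w)%E by rewrite /g le_max lexx orbT.
  rewrite -intf.
  apply: (@le_trans _ _ (\int[P]_w (g w + cst (2 * h)%:E w))%E).
    by apply: ge0_le_integral => //; exact: emeasurable_funD.
  rewrite (@ge0_integralD _ _ _ P setT measurableT g (cst (2 * h)%:E)) //; last first.
    by move=> w _; rewrite lee_fin mulr_ge0 // ltW.
  rewrite integral_cst //.
  set u := (X in ((2 * h)%:E * X)%E).
  have -> : u = 1%E by exact: probability_setT.
  rewrite mule1.
  apply: leeD2r; apply: ge0_le_integral_nm => // w _; exact: gZ.
apply: (le_trans step1).
apply: (@le_trans _ _ (\sum_(i < n) ((M * h)%:E * P (Gs i)))%E).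
  by apply: lee_sum => i _; exact: step2.
under eq_bigr do rewrite EFinM -muleA.
rewrite -ge0_sume_distrr; last by move=> i _; rewrite mule_ge0 // ltW.
apply: lee_wpmul2l; first by rewrite lee_fin.
rewrite -ge0_sume_distrr //.
Qed.

Lemma diff_bound :
  (P (Ev X Y1 t `&` ~` Ev X Y2 t) <= M%:E * \int[P]_w Zs Y1 Y2 t w)%E.
Proof.
set A := Ev X Y1 t `&` ~` Ev X Y2 t.
pose B (m : nat) := A `&` X @^-1` `](- m.+1%:R), (m.+1%:R)%R]%classic.
have mXJ (c e : R) : measurable (X @^-1` `]c, e]%classic).
  by have := mX measurableT (measurable_itv `]c, e]); rewrite setTI.
have mA : measurable A by apply: measurableI => //; exact: measurableC.
have mB m : measurable (B m) by apply: measurableI.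
have UB : \bigcup_m B m = A.
  apply/seteqP; split => [w [m _ []]//|w Aw].
  have [m hm] : exists m : nat, `|X w| < m.+1%:R.
    exists (Num.bound `|X w|); apply: (lt_trans (archi_boundP (normr_ge0 _))).
    by rewrite ltr_nat.
  exists m => //; split => //=; rewrite in_itv /=.
  by move: hm; rewrite ltr_norml => /andP[-> /ltW ->].
have ndB : nondecreasing_seq B.
  move=> m k mk; apply/subsetPset => w [Aw]; rewrite /= !in_itv /= => /andP[lo hi].
  have : (m.+1%:R : R) <= k.+1%:R by rewrite ler_nat.
  by split => //=; rewrite in_itv /=; apply/andP; split; lra.
have cB : P \o B @ \oo --> P A.
  by rewrite -[in P A]UB; apply: nondecreasing_cvg_mu => //; rewrite UB.
have Bm m : (P (B m) <= M%:E * (\int[P]_w Zs Y1 Y2 t w + (2 / m.+1%:R)%:E))%E.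
  have k0 : (0 : R) < m.+1%:R by rewrite ltr0n.
  have kinv : 0 < (m.+1%:R : R)^-1 by rewrite invr_gt0.
  have := core (- m.+1%:R) (2 * m.+1 * m.+1) kinv.
  have -> : - m.+1%:R + (2 * m.+1 * m.+1)%N%:R * m.+1%:R^-1 = (m.+1%:R : R).
    rewrite !natrM; field; exact: lt0r_neq0.
  by rewrite /B /A; move=> H; apply: (le_trans H).
apply/lee_addgt0Pr => e e0.
apply: (@le_trans _ _ (lim (P \o B @ \oo))); first by rewrite (cvg_lim _ cB).
apply: lime_le; first by apply/cvg_ex; exists (P A).
have I0 : (0 <= \int[P]_w Zs Y1 Y2 t w)%E by apply: integral_ge0 => w _; exact: Zs_ge0.
set N := Num.bound (2 * M / e).
exists N => // m /= Nm.
apply: (le_trans (Bm m)).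
rewrite ge0_muleDr ?lee_fin ?divr_ge0 //.
apply: leeD2l; rewrite -EFinM lee_fin.
have k0 : (0 : R) < m.+1%:R by rewrite ltr0n.
have h1 : 2 * M / e < m.+1%:R.
  apply: (lt_le_trans (archi_boundP _)); first by rewrite divr_ge0 // ?mulr_ge0 // ltW.
  by rewrite ler_nat -/N ltnS ltnW.
move: h1; rewrite ltr_pdivrMr // => h1.
rewrite mulrA ler_pdivrMr //; lra.
Qed.
End Core.

Lemma Zs_sym (U : Type) (R : realType) (Y1 Y2 : R -> U -> R) t w :
  Zs Y2 Y1 t w = Zs Y1 Y2 t w.
Proof.
rewrite /Zs; congr ereal_sup; apply/seteqP; split => _ [s st <-];
  by exists s => //; rewrite distrC.
Qed.

Lemma lemma3p10_aux (d : measure_display) (T : measurableType d) (R : realType)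
  (P : probability T R) (X : T -> R) (V : R -> R) (M : R)
  (Y1 Y2 : R -> T -> R) (t : R) :
  measurable_fun setT X ->
  measurable_fun setT V ->
  (forall A, measurable A ->
     P (X @^-1` A) = (\int[lebesgue_measure]_(x in A) (V x)%:E)%E) ->
  {ae lebesgue_measure, forall x, V x <= M} ->
  (forall s, 0 <= s -> measurable_fun setT (Y1 s)) ->
  (forall s, 0 <= s -> measurable_fun setT (Y2 s)) ->
  (forall w, cadlag (fun s => Y1 s w)) ->
  (forall w, cadlag (fun s => Y2 s w)) ->
  indep_rv_sigma P X (gen_sigma_pair Y1 Y2) ->
  0 <= t ->
  (`| P (Ev X Y1 t) - P (Ev X Y2 t) | <= M%:E * \int[P]_w Zs Y1 Y2 t w)%E.
Proof.
move=> mX mV HV HM mY1 mY2 c1 c2 hind t0.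
have DB := dens_bound mV HV HM.
have M0 : 0 <= M.
  have [//|M0] := leP 0 M; exfalso.
  have := DB setT measurableT; rewrite preimage_setT probability_setT.
  rewrite (max_r (ltW M0)) => h.
  have : (1 <= 0 :> \bar R)%E by apply: (le_trans h); rewrite mul0e.
  by rewrite lee_fin ler10.
have hJ (a h : R) : 0 < h -> (P (X @^-1` `]a, (a + h)%R]%classic) <= (M * h)%:E)%E.
  move=> h0; apply: (le_trans (DB _ (measurable_itv _))).
  rewrite max_l // lebesgue_measure_itv /= lte_fin ltrDl h0 -EFinB -EFinM.
  by rewrite addrAC subrr add0r.
pose G := gen_sigma_pair Y1 Y2.
pose gens := [set E : set T | exists s : R, exists B : set R,
        [/\ 0 <= s, measurable B & (E = Y1 s @^-1` B \/ E = Y2 s @^-1` B)]].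
have GE : G = <<s gens >> by [].
pose GT := g_sigma_algebraType gens.
have hGm B : G B -> measurable B.
  apply: smallest_sub; first exact: sigma_algebra_measurable.
  move=> _ [s [B' [s0 mB' [->|->]]]].
  - by have := mY1 s s0 measurableT _ mB'; rewrite setTI.
  - by have := mY2 s s0 measurableT _ mB'; rewrite setTI.
have hGI A B : G A -> G B -> G (A `&` B) by move=> hA hB; exact: (@measurableI _ GT A B hA hB).
have hGC A : G A -> G (~` A) by move=> hA; exact: (@measurableC _ GT A hA).
have hGY (Y : R -> T -> R) : (Y = Y1 \/ Y = Y2) -> forall c, G (Ex Y t c).
  move=> hY c; apply: (@Ex_meas _ _ GT) => //.
  - move=> s c' s0; apply: sub_sigma_algebra; exists s; exists `]-oo, c'[%classic.
    split => //.
    have -> : [set w | Y s w < c'] = Y s @^-1` `]-oo, c'[%classic.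
      by apply/seteqP; split => w /=; rewrite in_itv.
    by case: hY => ->; [left|right].
  - by move=> w s s0; case: hY => ->; [exact: (c1 w).1 | exact: (c2 w).1].
have hG1 := hGY Y1 (or_introl erefl).
have hG2 := hGY Y2 (or_intror erefl).
have mE1 : measurable (Ev X Y1 t) by apply: Ev_meas => // w s s0; exact: (c1 w).1.
have mE2 : measurable (Ev X Y2 t) by apply: Ev_meas => // w s s0; exact: (c2 w).1.
have D12 := diff_bound M0 hJ mX hGm hGI hGC hG1 hG2 hind mE1 mE2 t0.
have D21 := diff_bound M0 hJ mX hGm hGI hGC hG2 hG1 hind mE2 mE1 t0.
have ZE : (\int[P]_w Zs Y2 Y1 t w = \int[P]_w Zs Y1 Y2 t w)%E.
  by apply: eq_integral => w _; rewrite Zs_sym.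
rewrite ZE in D21.
have fin A : measurable A -> P A \is a fin_num.
  move=> mA; rewrite ge0_fin_numE ?measure_ge0 //.
  exact: (le_lt_trans (probability_le1 P mA) (ltey _)).
have m12 : measurable (Ev X Y1 t `&` ~` Ev X Y2 t) by apply: measurableI => //; exact: measurableC.
have m21 : measurable (Ev X Y2 t `&` ~` Ev X Y1 t) by apply: measurableI => //; exact: measurableC.
have sub (E F : set T) : measurable E -> measurable F ->
    (P E <= P (E `&` ~` F) + P F)%E.
  move=> mE mF; apply: (le_trans _ (measureU2 _ _ _)); last 2 first.
  - by apply: measurableI => //; exact: measurableC.
  - exact: mF.
  apply: le_measure; rewrite ?inE //.
  - by apply: measurableU => //; apply: measurableI => //; exact: measurableC.
  - move=> w Ew; have [Fw|nFw] := pselect (F w); [by right|by left].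
have s1 := sub _ _ mE1 mE2.
have s2 := sub _ _ mE2 mE1.
move: D12 D21 s1 s2.
rewrite -(fineK (fin _ mE1)) -(fineK (fin _ mE2)) -(fineK (fin _ m12)) -(fineK (fin _ m21)).
set a := fine (P (Ev X Y1 t)); set b := fine (P (Ev X Y2 t)).
set c := fine (P _); set e := fine (P _).
rewrite -EFinB abse_EFin -!EFinD.
case: (M%:E * _)%E => [r| |]; rewrite ?leey // ?lee_fin ?leeNy_eq //.
by move=> h1 h2 h3 h4; rewrite ler_norml; apply/andP; split; lra.
Qed.

Unset Implicit Arguments.

Theorem lemma3p10 (d : measure_display) (T : measurableType d) (R : realType)
  (P : probability T R) (X : T -> R) (V : R -> R) (M : R)
  (Y1 Y2 : R -> T -> R) (t : R) :
  measurable_fun setT X ->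
  measurable_fun setT V ->
  (forall A, measurable A ->
     P (X @^-1` A) = (\int[lebesgue_measure]_(x in A) (V x)%:E)%E) ->
  {ae lebesgue_measure, forall x, V x <= M} ->
  (forall s, 0 <= s -> measurable_fun setT (Y1 s)) ->
  (forall s, 0 <= s -> measurable_fun setT (Y2 s)) ->
  (forall w, cadlag (fun s => Y1 s w)) ->
  (forall w, cadlag (fun s => Y2 s w)) ->
  indep_rv_sigma P X (gen_sigma_pair Y1 Y2) ->
  0 <= t ->
  (`| P [set w | (ereal_inf [set (X w + Y1 s w)%:E | s in `[0%R, t]%classic] <= 0)%E]
      - P [set w | (ereal_inf [set (X w + Y2 s w)%:E | s in `[0%R, t]%classic] <= 0)%E] |
   <= M%:E * \int[P]_w ereal_sup [set `|Y1 s w - Y2 s w|%:E | s in `[0%R, t]%classic])%E.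
Proof. exact: lemma3p10_aux. Qed.
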